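(* There exist permutations $\pi$ (one on $n$ keys for infinitely many $n$) such that $\mathrm{LIB}(\pi)=\Theta(\lg\lg n\cdot \mathrm{IB}(\pi))$.
   Context: For a permutation $\pi$ of $n$ keys, let $P$ be a static balanced binary tree whose leaves are the keys of $\pi$ in the order of $\pi$. For each internal vertex $v$ of $P$, list the leaves below $v$ in sorted key order, labeling each L or R according to whether it lies in the left or right subtree of $v$. $\mathrm{IB}(v)$ is the number of switches between L and R, $\mathrm{IB}(\pi)=\sum_v \mathrm{IB}(v)$. With $S(v)$ the decomposition of the labeled sequence into the minimal number of runs of equal labels, $\mathrm{LIB}(v)=\sum_{r\in S(v)}\lg(|r|+1)$ and $\mathrm{LIB}(\pi)=\sum_v\mathrm{LIB}(v)$. *)

(* Defs.v *)
From mathcomp Require Import all_boot.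
From Stdlib Require Import Reals.

Set Implicit Arguments.
Unset Strict Implicit.
Unset Printing Implicit Defensive.

Definition lg (x : R) : R := (ln x / ln 2)%R.

(* Internal vertices of the static balanced binary tree whose leaves are the
   entries of s (in the order of s).  Each internal vertex is represented by
   the pair (leaves of left subtree, leaves of right subtree), in tree order.
   A node with m >= 2 leaves puts the first ceil(m/2) leaves on the left and
   the remaining floor(m/2) on the right.  [fuel] only ensures termination;
   fuel = size s is enough. *)
Fixpoint internal_vertices_aux (fuel : nat) (s : seq nat)
  : seq (seq nat * seq nat) :=
  match fuel with
  | 0 => [::]
  | f.+1 =>
    if size s <= 1 then [::]
    else
      let h := uphalf (size s) in
      let L := take h s in
      let Rt := drop h s in
      (L, Rt) :: (internal_vertices_aux f L ++ internal_vertices_aux f Rt)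
  end.

Definition internal_vertices (s : seq nat) := internal_vertices_aux (size s) s.

(* Leaves below v listed in sorted key order, labelled false = L, true = R *)
Definition labels (v : seq nat * seq nat) : seq bool :=
  [seq (k \in v.2) | k <- sort leq (v.1 ++ v.2)].

Fixpoint switches (s : seq bool) : nat :=
  match s with
  | b :: ((c :: _) as t) => (b != c) + switches t
  | _ => 0
  end.

Fixpoint runs_aux (b : bool) (k : nat) (t : seq bool) : seq nat :=
  match t with
  | [::] => [:: k]
  | c :: t' => if c == b then runs_aux b k.+1 t' else k :: runs_aux c 1 t'
  end.

Definition runs (s : seq bool) : seq nat :=
  match s with
  | [::] => [::]
  | b :: t => runs_aux b 1 t
  end.

Definition IB_v (v : seq nat * seq nat) : nat := switches (labels v).

Definition LIB_v (v : seq nat * seq nat) : R :=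
  foldr Rplus 0%R [seq lg (INR r.+1) | r <- runs (labels v)].

Definition IB (pi : seq nat) : nat := sumn [seq IB_v v | v <- internal_vertices pi].

Definition LIB (pi : seq nat) : R :=
  foldr Rplus 0%R [seq LIB_v v | v <- internal_vertices pi].

Definition is_perm_of (n : nat) (pi : seq nat) : bool := perm_eq pi (iota 0 n).

(* Main.v *)
Require Import Defs.
From mathcomp Require Import all_boot.
From Stdlib Require Import Reals.
From mathcomp Require Import zify.
From Stdlib Require Import Lra Psatz.
Notation "m ^ n" := (expn m n) : nat_scope.

Lemma aux_fuel f g s : size s <= f -> size s <= g ->
  internal_vertices_aux f s = internal_vertices_aux g s.
Proof.
elim: f g s => [|f IH] [|g] s /= hf hg //.
- by rewrite (leq_trans hf).
- by rewrite (leq_trans hg).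
case: ifP => // h2.
have hs : 1 < size s by rewrite ltnNge h2.
have h1 : size (take (uphalf (size s)) s) < size s.
  rewrite size_take; case: ifP => hh; lia.
have h3 : size (drop (uphalf (size s)) s) < size s.
  rewrite size_drop; lia.
by rewrite (IH g) ?(IH g (drop _ _)) //; lia.
Qed.

Lemma iv_split s : 1 < size s ->
  internal_vertices s =
  (take (uphalf (size s)) s, drop (uphalf (size s)) s) ::
    (internal_vertices (take (uphalf (size s)) s) ++
     internal_vertices (drop (uphalf (size s)) s)).
Proof.
move=> hs; rewrite /internal_vertices.
have [n E] : exists n, size s = n.+1 by exists (size s).-1; lia.
transitivity (internal_vertices_aux n.+1 s); first by rewrite E.
rewrite [internal_vertices_aux n.+1 s]/= ifN; last by rewrite -ltnNge.
have h1 : size (take (uphalf (size s)) s) <= n.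
  rewrite size_take E; case: ifP => hh; lia.
have h3 : size (drop (uphalf (size s)) s) <= n.
  rewrite size_drop E; lia.
by congr (_ :: _ ++ _); apply: aux_fuel.
Qed.

Lemma foldrR_cat (l1 l2 : seq R) :
  foldr Rplus 0%R (l1 ++ l2) = (foldr Rplus 0%R l1 + foldr Rplus 0%R l2)%R.
Proof. elim: l1 => /= [|a l IH]; rewrite ?IH; ring. Qed.

Lemma IB_split s : 1 < size s ->
  IB s = IB_v (take (uphalf (size s)) s, drop (uphalf (size s)) s) +
         IB (take (uphalf (size s)) s) + IB (drop (uphalf (size s)) s).
Proof.
move=> hs; rewrite /IB iv_split //= map_cat sumn_cat addnA //.
Qed.

Lemma LIB_split s : 1 < size s ->
  LIB s = (LIB_v (take (uphalf (size s)) s, drop (uphalf (size s)) s) +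
         LIB (take (uphalf (size s)) s) + LIB (drop (uphalf (size s)) s))%R.
Proof.
move=> hs; rewrite /LIB iv_split //= map_cat foldrR_cat; ring.
Qed.

Section Mono.
Variable f : nat -> nat.
Hypothesis fmono : {mono f : x y / x <= y}.

Lemma finj : injective f.
Proof. by move=> x y e; apply/eqP; rewrite eqn_leq -[x <= y]fmono -[y <= x]fmono e leqnn. Qed.

Lemma iv_map fuel s : internal_vertices_aux fuel (map f s) =
  map (fun v => (map f v.1, map f v.2)) (internal_vertices_aux fuel s).
Proof.
elim: fuel s => [|fu IH] s //=.
rewrite size_map; case: ifP => // _.
by rewrite -map_take -map_drop !IH /= map_cat.
Qed.

Lemma labels_map a b : labels (map f a, map f b) = labels (a, b).
Proof.
rewrite /labels /= -map_cat -(map_sort fmono) -map_comp.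
apply: eq_map => k /=; by rewrite (mem_map finj).
Qed.

Lemma IB_map s : IB (map f s) = IB s.
Proof.
rewrite /IB /internal_vertices size_map iv_map -map_comp.
by congr sumn; apply: eq_map => v /=; rewrite /IB_v labels_map; case: v.
Qed.

Lemma LIB_map s : LIB (map f s) = LIB s.
Proof.
rewrite /LIB /internal_vertices size_map iv_map -map_comp.
by congr foldr; apply: eq_map => v /=; rewrite /LIB_v labels_map; case: v.
Qed.
End Mono.
Fixpoint alt (b : bool) (m c : nat) : seq bool :=
  if c is c'.+1 then nseq m b ++ alt (~~ b) m c' else [::].

Lemma map_constE (T U : Type) (s : seq T) (x : U) : [seq x | _ <- s] = nseq (size s) x.
Proof. by elim: s => //= y s ->. Qed.

Lemma alt_iota m a c : 0 < m ->
  [seq odd (k %/ m) | k <- iota (a * m) (c * m)] = alt (odd a) m c.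
Proof.
move=> m0; elim: c a => [|c IH] a //=.
rewrite mulSn iotaD map_cat -mulSnr IH /=; congr (_ ++ _).
have -> : [seq odd (k %/ m) | k <- iota (a * m) m] = [seq odd a | k <- iota (a * m) m].
  apply/eq_in_map => k; rewrite mem_iota => /andP [h1 h2].
  have -> : k = a * m + (k - a * m) by lia.
  by rewrite divnMDl // divn_small ?addn0 //; lia.
by rewrite map_constE size_iota.
Qed.

Lemma runs_aux_nseq b k j t : runs_aux b k (nseq j b ++ t) = runs_aux b (k + j) t.
Proof. elim: j k => [|j IH] k /=; first by rewrite addn0. by rewrite eqxx IH addnS. Qed.

Lemma runs_aux_alt b k m c : 0 < m ->
  runs_aux b k (alt (~~ b) m c) = k :: nseq c m.
Proof.
case: m => // m _; elim: c b k => [|c IH] b k //=.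
rewrite /= ifN; last by case: b.
by rewrite runs_aux_nseq IH add1n.
Qed.

Lemma switches_nseq b j t : switches (b :: nseq j b ++ t) = switches (b :: t).
Proof. by elim: j => //= j ->; rewrite eqxx. Qed.

Lemma switches_cons2 x y t : switches (x :: y :: t) = (x != y) + switches (y :: t).
Proof. by []. Qed.

Lemma switches_alt b m c : 0 < m -> switches (b :: alt (~~ b) m c) = c.
Proof.
case: m => // m _; elim: c b => [|c IH] b //.
rewrite [alt _ _ _]/= ?cat_cons switches_cons2 switches_nseq IH; by case: b.
Qed.

Lemma runs_alt m c : 0 < m -> runs (alt false m c.+1) = nseq c.+1 m.
Proof.
case: m => // m _ /=.
by rewrite runs_aux_nseq add1n (runs_aux_alt false).
Qed.

Lemma switches_alt0 m c : 0 < m -> switches (alt false m c.+1) = c.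
Proof.
case: m => // m _.
by rewrite [alt _ _ _]/= switches_nseq (switches_alt false).
Qed.

Definition ins (i : nat) (b : bool) (k : nat) : nat := k + (k %/ 2 ^ i) * 2 ^ i + b * 2 ^ i.

Lemma ins_mono i b : {mono ins i b : x y / x <= y}.
Proof.
apply: leq_mono => x y hxy; rewrite /ins.
have := @leq_div2r (2 ^ i) x y (ltnW hxy).
have := leq_mul (@leq_div2r (2 ^ i) x y (ltnW hxy)) (leqnn (2 ^ i)).
lia.
Qed.

Lemma ins_decomp i b k :
  ins i b k = ((k %/ 2 ^ i).*2 + b) * 2 ^ i + k %% 2 ^ i.
Proof.
rewrite /ins {1}(divn_eq k (2 ^ i)).
rewrite -addnn !mulnDl; lia.
Qed.

Lemma ins_div i b k : ins i b k %/ 2 ^ i = (k %/ 2 ^ i).*2 + b.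
Proof.
have hM : 0 < 2 ^ i by rewrite expn_gt0.
by rewrite ins_decomp divnMDl // (divn_small (ltn_pmod k hM)) addn0.
Qed.

Lemma ins_odd i b k : odd (ins i b k %/ 2 ^ i) = b.
Proof. by rewrite ins_div oddD odd_double; case: b. Qed.

Lemma ins_lt i b k d : i <= d -> k < 2 ^ d -> ins i b k < 2 ^ d.+1.
Proof.
move=> hid hk; rewrite ins_decomp.
have hM : 0 < 2 ^ i by rewrite expn_gt0.
have E : 2 ^ d = 2 ^ (d - i) * 2 ^ i by rewrite -expnD subnK.
have hq : k %/ 2 ^ i < 2 ^ (d - i) by rewrite ltn_divLR // -E.
have hr := ltn_pmod k hM.
rewrite expnS E.
move: hq hr hM; set q := k %/ 2 ^ i; set r := k %% 2 ^ i; set M := 2 ^ i; set Q := 2 ^ (d - i).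
move=> hq hr hM.
have : (q.*2 + b) < Q.*2 by case: b; lia.
move=> h.
have := leq_mul h (leqnn M).
rewrite -!muln2; nia.
Qed.

Fixpoint pis (t d : nat) : seq nat :=
  if d is d'.+1 then
    map (ins (minn t d') false) (pis t d') ++ map (ins (minn t d') true) (pis t d')
  else [:: 0].

Lemma size_pis t d : size (pis t d) = 2 ^ d.
Proof. elim: d => //= d IH; by rewrite size_cat !size_map IH expnS mul2n addnn. Qed.

Lemma perm_pis t d : perm_eq (pis t d) (iota 0 (2 ^ d)).
Proof.
elim: d => [|d IH] //=.
set i := minn t d.
have hid : i <= d by rewrite geq_minr.
have hmem : forall x, x \in pis t d -> x < 2 ^ d.
  by move=> x; rewrite (perm_mem IH) mem_iota.
have hu : uniq (pis t d) by rewrite (perm_uniq IH) iota_uniq.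
have U : uniq (map (ins i false) (pis t d) ++ map (ins i true) (pis t d)).
  rewrite cat_uniq (map_inj_uniq (@finj _ (ins_mono i false))) (map_inj_uniq (@finj _ (ins_mono i true))) hu /=.
  rewrite andbT; apply/hasPn => x /mapP [k _ ->]; apply/negP => /mapP [k' _ e].
  by have := ins_odd i true k; rewrite e ins_odd.
have S : {subset map (ins i false) (pis t d) ++ map (ins i true) (pis t d) <= iota 0 (2 ^ d.+1)}.
  move=> x; rewrite mem_cat mem_iota /= => /orP [] /mapP [k hk ->];
  exact: ins_lt _ _ _ _ hid (hmem _ hk).
have hsz : size (iota 0 (2 ^ d.+1)) <= size (map (ins i false) (pis t d) ++ map (ins i true) (pis t d)).
  by rewrite size_iota size_cat !size_map size_pis addnn -mul2n -expnS.
have [hs he] := uniq_min_size U S hsz.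
exact: uniq_perm U (iota_uniq _ _) he.
Qed.

Lemma labels_root t d :
  labels (map (ins (minn t d) false) (pis t d), map (ins (minn t d) true) (pis t d))
  = alt false (2 ^ minn t d) (2 ^ (d.+1 - minn t d)).
Proof.
set i := minn t d.
have hid : i <= d by rewrite geq_minr.
have hM : 0 < 2 ^ i by rewrite expn_gt0.
have P := perm_pis t d.+1.
rewrite /labels /=.
have -> : sort leq (map (ins i false) (pis t d) ++ map (ins i true) (pis t d)) = iota 0 (2 ^ d.+1).
  rewrite -[RHS](sorted_sort leq_trans (iota_sorted 0 _)).
  apply/perm_sortP => //; [exact: leq_total | exact: leq_trans | exact: anti_leq].
transitivity [seq odd (k %/ 2 ^ i) | k <- iota 0 (2 ^ d.+1)].
  apply/eq_in_map => k hk.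
  have hk' : k \in pis t d.+1 by rewrite (perm_mem P).
  case hR: (k \in map (ins i true) (pis t d)).
    by move/mapP: hR => [k' _ ->]; rewrite ins_odd.
  by move: hk'; rewrite /= mem_cat hR orbF => /mapP [k' _ ->]; rewrite ins_odd.
have E : 2 ^ d.+1 = 2 ^ (d.+1 - i) * 2 ^ i by rewrite -expnD subnK // (leq_trans hid).
have := alt_iota (2 ^ i) 0 (2 ^ (d.+1 - i)) hM; rewrite mul0n -E => ->.
by [].
Qed.

Lemma foldr_nseq c m :
  foldr Rplus 0%R [seq lg (INR r.+1) | r <- nseq c m] = (INR c * lg (INR m.+1))%R.
Proof. elim: c => [|c IH]; first by rewrite /= Rmult_0_l.
change (lg (INR m.+1) + foldr Rplus 0%R [seq lg (INR r.+1) | r <- nseq c m] = INR c.+1 * lg (INR m.+1))%R.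
rewrite IH (S_INR c); ring. Qed.

Lemma IB_rec t d :
  IB (pis t d.+1) = (2 ^ (d.+1 - minn t d)).-1 + 2 * IB (pis t d).
Proof.
set i := minn t d.
have Ep : pis t d.+1 = map (ins i false) (pis t d) ++ map (ins i true) (pis t d) by [].
have hs : 1 < size (pis t d.+1) by rewrite size_pis expnS; have := expn_gt0 2 d; lia.
have hh : uphalf (size (pis t d.+1)) = 2 ^ d by rewrite size_pis expnS mul2n uphalf_double.
rewrite IB_split // hh Ep take_size_cat ?drop_size_cat ?size_map ?size_pis //.
rewrite !IB_map; try exact: ins_mono.
rewrite /IB_v labels_root.
have : 0 < 2 ^ (d.+1 - i) by rewrite expn_gt0.
case: (2 ^ (d.+1 - i)) => [|c] // _.
rewrite switches_alt0 ?expn_gt0 //=; lia.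
Qed.

Lemma LIB_rec t d :
  LIB (pis t d.+1) = (INR (2 ^ (d.+1 - minn t d)) * lg (INR (2 ^ minn t d).+1) + 2 * LIB (pis t d))%R.
Proof.
set i := minn t d.
have Ep : pis t d.+1 = map (ins i false) (pis t d) ++ map (ins i true) (pis t d) by [].
have hs : 1 < size (pis t d.+1) by rewrite size_pis expnS; have := expn_gt0 2 d; lia.
have hh : uphalf (size (pis t d.+1)) = 2 ^ d by rewrite size_pis expnS mul2n uphalf_double.
rewrite LIB_split // hh Ep take_size_cat ?drop_size_cat ?size_map ?size_pis //.
rewrite !LIB_map; try exact: ins_mono.
rewrite /LIB_v labels_root.
have : 0 < 2 ^ (d.+1 - i) by rewrite expn_gt0.
case: (2 ^ (d.+1 - i)) => [|c] // _.
rewrite runs_alt ?expn_gt0 // foldr_nseq.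
rewrite /i; ring.
Qed.

Lemma IB_small t d : d <= t -> (IB (pis t d)).+1 = 2 ^ d.
Proof.
elim: d => [|d IH] hd; first by [].
rewrite IB_rec.
have -> : minn t d = d by apply/minn_idPr; lia.
rewrite subSn // subnn expn1 /= expnS -IH; last lia.
lia.
Qed.

Lemma IB_big t e : IB (pis t (t + e)) + 2 ^ e.+1 = e * 2 ^ e + 2 ^ (t + e) + 1.
Proof.
elim: e => [|e IH].
  have := @IB_small t t (leqnn t); rewrite addn0 expn1 mul0n; lia.
rewrite addnS IB_rec.
have -> : minn t (t + e) = t by apply/minn_idPl; lia.
have -> : (t + e).+1 - t = e.+1 by lia.
move: IH; rewrite !expnS; set X := 2 ^ e; set Y := 2 ^ (t + e).
have : 0 < X by rewrite expn_gt0.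
nia.
Qed.

Lemma INR_exp2 k : INR (2 ^ k) = (2 ^ k)%R.
Proof.
elim: k => [|k IH]; first by [].
rewrite expnS -multE mult_INR IH /=; ring.
Qed.

Lemma ln2_pos : (0 < ln 2)%R.
Proof. rewrite -ln_1; apply: ln_increasing; lra. Qed.

Lemma lg_le x y : (0 < x)%R -> (x <= y)%R -> (lg x <= lg y)%R.
Proof.
move=> hx hxy; rewrite /lg /Rdiv.
apply: Rmult_le_compat_r; first by left; apply: Rinv_0_lt_compat; exact: ln2_pos.
case: (Rle_lt_or_eq_dec _ _ hxy) => h; last by rewrite h; lra.
by left; apply: ln_increasing.
Qed.

Lemma lg_exp2 k : lg (INR (2 ^ k)) = INR k.
Proof.
rewrite INR_exp2 /lg ln_pow; last lra.
field; have := ln2_pos; lra.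
Qed.

Lemma lg_bounds k : (INR k <= lg (INR (2 ^ k).+1) <= INR k + 1)%R.
Proof.
have h0 : (0 < INR (2 ^ k))%R by apply: lt_0_INR; apply/ltP; rewrite expn_gt0.
split.
  rewrite -{1}(lg_exp2 k); apply: lg_le => //; rewrite S_INR; lra.
rewrite -S_INR -(lg_exp2 k.+1); apply: lg_le; first by rewrite S_INR; lra.
apply: le_INR; apply/leP; rewrite expnS; have := expn_gt0 2 k; lia.
Qed.

Lemma LIB_nonneg t d : (0 <= LIB (pis t d))%R.
Proof.
elim: d => [|d IH]; first by rewrite /LIB /=; lra.
rewrite LIB_rec.
have := lg_bounds (minn t d); have := pos_INR (minn t d); have := pos_INR (2 ^ (d.+1 - minn t d)).
nra.
Qed.

Lemma LIB_small t d : d <= t -> (LIB (pis t d) <= 4 * INR (2 ^ d) - 2 * (INR d + 2))%R.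
Proof.
elim: d => [|d IH] hd; first by rewrite /LIB /=; lra.
rewrite LIB_rec.
have -> : minn t d = d by apply/minn_idPr; lia.
rewrite subSn // subnn expn1.
have := lg_bounds d; have := IH (ltnW hd).
rewrite expnS -multE mult_INR (S_INR d) (_ : INR 2 = 2%R); last by simpl; lra.
move=> *; lra.
Qed.

Lemma LIB_big t e : LIB (pis t (t + e)) =
  (INR (2 ^ e) * LIB (pis t t) + INR e * INR (2 ^ e) * lg (INR (2 ^ t).+1))%R.
Proof.
elim: e => [|e IH].
  by rewrite addn0 /=; ring.
rewrite addnS LIB_rec.
have -> : minn t (t + e) = t by apply/minn_idPl; lia.
have -> : (t + e).+1 - t = e.+1 by lia.
rewrite IH expnS -multE mult_INR (S_INR e) (_ : INR 2 = 2%R); last by simpl; lra.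
ring.
Qed.

Lemma real_final (T A lgD IBr L : R) :
  (1 <= T)%R -> (0 <= A)%R -> (2 * T <= lgD <= 2 * T + 1)%R ->
  (A <= IBr <= 3 * A)%R -> (T * A <= L <= (T + 5) * A)%R ->
  (1/16 * lgD * IBr <= L)%R /\ (L <= 3 * lgD * IBr)%R.
Proof.
move=> hT hA [l1 l2] [i1 i2] [L1 L2].
have h1 : (lgD * IBr <= (2 * T + 1) * (3 * A))%R.
  apply: Rmult_le_compat; lra.
have h2 : (2 * T * A <= lgD * IBr)%R.
  apply: Rmult_le_compat; lra.
split; nra.
Qed.

Theorem lemma3 :
  exists c1 c2 : R, (0 < c1)%R /\ (0 < c2)%R /\
    forall N : nat, exists (n : nat) (pi : seq nat),
      (N <= n)%N /\ is_perm_of n pi /\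
      (c1 * lg (lg (INR n)) * INR (IB pi) <= LIB pi)%R /\
      (LIB pi <= c2 * lg (lg (INR n)) * INR (IB pi))%R.
Proof.
exists (1/16)%R, 3%R; split; first lra; split; first lra.
move=> N.
set t := N.+1; set e := 2 ^ (2 * t); set D := t + e.
have ht : t < 2 ^ t by apply: ltn_expl.
have hte : 2 ^ t <= e by rewrite /e leq_exp2l //; lia.
have hX : 0 < 2 ^ e by rewrite expn_gt0.
have hD : D < 2 ^ D by apply: ltn_expl.
exists (2 ^ D), (pis t D); split; first lia.
split; first exact: perm_pis.
rewrite lg_exp2.
have hT : (1 <= INR t)%R by apply: (le_INR 1); apply/leP; lia.
have hlgD : (2 * INR t <= lg (INR D) <= 2 * INR t + 1)%R.
  split.
    rewrite (_ : 2 * INR t = INR (2 * t))%R; last by rewrite -multE mult_INR.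
    rewrite -lg_exp2; apply: lg_le.
      by apply: lt_0_INR; apply/ltP; rewrite expn_gt0.
    by apply: le_INR; apply/leP; rewrite /D /e; lia.
  rewrite (_ : 2 * INR t + 1 = INR (2 * t).+1)%R; last by rewrite S_INR -multE mult_INR.
  rewrite -(lg_exp2 (2 * t).+1); apply: lg_le.
    by apply: lt_0_INR; apply/ltP; rewrite /D; lia.
  apply: le_INR; apply/leP; rewrite expnS /D -/e; lia.
have hIB := IB_big t e.
rewrite -/D in hIB.
have hIB1 : e * 2 ^ e <= IB (pis t D).
  move: hIB; rewrite expnS expnD; nia.
have hIB2 : IB (pis t D) <= 3 * (e * 2 ^ e).
  move: hIB; rewrite expnS expnD; nia.
set A := (INR e * INR (2 ^ e))%R.
have hA : (0 <= A)%R by rewrite /A; have := pos_INR e; have := pos_INR (2 ^ e); nra.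
have hIBr : (A <= INR (IB (pis t D)) <= 3 * A)%R.
  split.
    by rewrite /A -mult_INR multE; apply: le_INR; apply/leP.
  rewrite /A (_ : 3 * (INR e * INR (2 ^ e)) = INR (3 * (e * 2 ^ e)))%R; last first.
    rewrite -!multE !mult_INR; congr (_ * _)%R; simpl; lra.
  by apply: le_INR; apply/leP.
have hL : (INR t * A <= LIB (pis t D) <= (INR t + 5) * A)%R.
  rewrite /D LIB_big.
  have := LIB_nonneg t t; have := @LIB_small t t (leqnn t); have := lg_bounds t.
  have hte' : (INR (2 ^ t) <= INR e)%R by apply: le_INR; apply/leP.
  have := pos_INR (2 ^ e); have := pos_INR e; have := pos_INR t.
  move=> hX0 he0 ht0 hlg hLs hLn.
  set L0 := LIB (pis t t) in hLs hLn *.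
  set l := lg (INR (2 ^ t).+1) in hlg *.
  have hL0 : (L0 <= 4 * INR e)%R by have := pos_INR t; lra.
  have p1 : (0 <= INR (2 ^ e) * L0)%R by apply: Rmult_le_pos.
  have p2 : (INR (2 ^ e) * L0 <= INR (2 ^ e) * (4 * INR e))%R by apply: Rmult_le_compat_l.
  have p3 : (A * INR t <= A * l)%R by apply: Rmult_le_compat_l; lra.
  have p4 : (A * l <= A * (INR t + 1))%R by apply: Rmult_le_compat_l; lra.
  split; rewrite /A in p2 p3 p4 *; lra.
have := @real_final _ _ _ _ _ hT hA hlgD hIBr hL.
move=> [h1 h2]; split; lra.
Qed.
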